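(* There is a universal constant $C>0$ such that for all $s\geq 2$ and $r\geq 0$ the Euclidian-hyperboloidal time function $T$ satisfies $$ |\partial_s T(s,r)|\leq \begin{cases} C\,\dfrac{s}{(s^2+r^2)^{1/2}}, & r\leq -1+s^2/2,\\[2mm] C\Big(\dfrac{\xi(s,r)\,s}{(s^2+r^2)^{1/2}}+2(1-\xi(s,r))\,s\Big), & -1+s^2/2\leq r\leq s^2/2,\\[2mm] 2C\,s, & r\geq s^2/2. \end{cases} $$ (In the first region one has $T(s,r)=\sqrt{s^2+r^2}$, so the first bound is $C\,s/T(s,r)$.)
   Context: Let $\rho_1(y)=e^{-2/(1-(2y-1)^2)}$ for $0<y<1$ and $\rho_1(y)=0$ otherwise, let $\rho_0=\int_{\mathbb R}\rho_1$, and let $\chi(y)=\rho_0^{-1}\int_{-\infty}^y\rho_1(y')\,dy'$; so $\chi$ is smooth, $\chi=0$ on $(-\infty,0]$, $\chi=1$ on $[1,\infty)$, strictly increasing on $(0,1)$. For $s\geq 2$, $r\geq 0$ set $\xi(s,r)=1-\chi(r+1-s^2/2)$, so $\xi=1$ for $r\leq -1+s^2/2$ and $\xi=0$ for $r\geq s^2/2$. The function $T=T(s,r)$ ($s\geq 2$, $r\geq 0$) is defined by $\partial_r T(s,r)=\xi(s,r)\,\dfrac{r}{\sqrt{r^2+s^2}}$, $T(s,0)=s$. *)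

(* Defs.v *)
From Stdlib Require Import Reals.
From Coquelicot Require Import Coquelicot.
Open Scope R_scope.

Definition rho1 (y : R) : R :=
  if Rlt_dec 0 y then
    if Rlt_dec y 1 then exp (-2 / (1 - (2*y - 1)^2)) else 0
  else 0.

(* rho_0 = integral of rho_1 over R; rho_1 is supported in [0,1]. *)
Definition rho0 : R := RInt rho1 0 1.

(* chi(y) = rho_0^{-1} * int_{-oo}^y rho_1; since rho_1 = 0 on (-oo,0],
   int_{-oo}^y rho_1 = int_0^y rho_1 (oriented integral, = 0 for y <= 0). *)
Definition chi (y : R) : R := RInt rho1 0 y / rho0.

Definition xi (s r : R) : R := 1 - chi (r + 1 - s^2 / 2).

Definition T (s r : R) : R :=
  s + RInt (fun r' => xi s r' * (r' / sqrt (r'^2 + s^2))) 0 r.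

(* Main.v *)
Require Import Defs.
From Stdlib Require Import Reals Lra Psatz.
From Coquelicot Require Import Coquelicot.
Open Scope R_scope.

Lemma rho1_ge0 y : 0 <= rho1 y.
Proof. unfold rho1; destruct Rlt_dec; [destruct Rlt_dec|]; try lra. apply Rlt_le, exp_pos. Qed.

Lemma rho1_pos y : 0 < y < 1 -> 0 < rho1 y.
Proof. intros H; unfold rho1; destruct Rlt_dec; [destruct Rlt_dec|]; try lra. apply exp_pos. Qed.

Lemma rho1_out y : y <= 0 \/ 1 <= y -> rho1 y = 0.
Proof. intros H; unfold rho1; destruct Rlt_dec; [destruct Rlt_dec|]; lra. Qed.

Lemma exp_small w : 0 < w -> exp (-2 / w) <= w / 2.
Proof.
  intros Hw. assert (H := exp_ineq1 (2/w)).
  assert (H2 : 0 < 2 / w) by (apply Rdiv_lt_0_compat; lra).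
  assert (Hp : exp (2/w) > 2/w) by (apply Rlt_gt; specialize (H ltac:(lra)); lra).
  replace (-2/w) with (- (2/w)) by (field; lra).
  rewrite exp_Ropp. 
  assert (0 < exp (2/w)) by apply exp_pos.
  apply (Rmult_le_reg_l (exp (2/w))); auto.
  rewrite Rinv_r by lra.
  assert (exp (2/w) * (w/2) >= 2/w * (w/2)) by (apply Rmult_ge_compat_r; lra).
  replace (2/w*(w/2)) with 1 in H1 by (field; lra). lra.
Qed.

Lemma rho1_bound y : rho1 y <= 2 * Rabs y /\ rho1 y <= 2 * Rabs (y - 1).
Proof.
  unfold rho1; destruct Rlt_dec; [destruct Rlt_dec|]; split; try (apply Rmult_le_pos; [lra|apply Rabs_pos]).
  all: eapply Rle_trans; [apply exp_small; nra|].
  all: rewrite ?Rabs_right by lra; rewrite ?Rabs_left by lra; nra.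
Qed.

Lemma rho1_cont y : continuity_pt rho1 y.
Proof.
  destruct (Rlt_dec 0 y) as [H0|H0]; [destruct (Rlt_dec y 1) as [H1|H1]|].
  - apply continuity_pt_locally_ext with (a := Rmin y (1-y)) (f := fun y => exp (-2 / (1 - (2*y - 1)^2))).
    + apply Rmin_glb_lt; lra.
    + intros z Hz. unfold Rdist in Hz. 
      assert (Rmin y (1-y) <= y) by apply Rmin_l. assert (Rmin y (1-y) <= 1-y) by apply Rmin_r.
      apply Rabs_def2 in Hz.
      unfold rho1; destruct Rlt_dec; [destruct Rlt_dec|]; lra.
    + apply continuity_pt_filterlim. apply (ex_derive_continuous (fun y => exp (-2 / (1 - (2*y - 1)^2)))).
      auto_derive. nra.
  - apply continuity_pt_filterlim. intros P [eps HP].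
    exists (pos_div_2 eps). intros z Hz. apply HP.
    destruct (rho1_bound z) as [_ B]. rewrite (rho1_out y) by lra.
    unfold ball in *; simpl in *; unfold AbsRing_ball, abs, minus, plus, opp in *; simpl in *.
    rewrite Ropp_0, Rplus_0_r; rewrite Rabs_right by (apply Rle_ge, rho1_ge0).
    destruct (Rle_dec 1 z). { rewrite rho1_out by lra. destruct eps; simpl; lra. }
    apply Rnot_lt_le in H1. apply Rnot_le_lt in n. assert (Rabs (z - 1) <= Rabs (z + - y)) by (rewrite (Rabs_left1 (z-1)), (Rabs_left1 (z + - y)); lra). lra.
  - apply continuity_pt_filterlim. intros P [eps HP].
    exists (pos_div_2 eps). intros z Hz. apply HP.
    destruct (rho1_bound z) as [B _]. rewrite (rho1_out y) by lra.
    unfold ball in *; simpl in *; unfold AbsRing_ball, abs, minus, plus, opp in *; simpl in *.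
    rewrite Ropp_0, Rplus_0_r; rewrite Rabs_right by (apply Rle_ge, rho1_ge0).
    destruct (Rle_dec z 0). { rewrite rho1_out by lra. destruct eps; simpl; lra. }
    apply Rnot_lt_le in H0. apply Rnot_le_lt in n. assert (Rabs z <= Rabs (z + - y)) by (rewrite !Rabs_right by lra; lra). lra.
Qed.

Lemma rho1_c y : continuous rho1 y.
Proof. apply continuity_pt_filterlim, rho1_cont. Qed.

Lemma ex_rho1 a b : ex_RInt rho1 a b.
Proof. apply (ex_RInt_continuous (V:=R_CompleteNormedModule)). intros; apply rho1_c. Qed.

Lemma rho0_pos : 0 < rho0.
Proof.
  unfold rho0. assert (E : RInt (fun _ => 0) 0 1 = 0).
  { rewrite RInt_const. unfold scal; simpl; unfold mult; simpl. ring. }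
  rewrite <- E at 1. apply RInt_lt; try lra.
  - intros; apply rho1_c.
  - intros; apply continuous_const.
  - intros; apply rho1_pos; lra.
Qed.

Lemma chi_deriv y : is_derive chi y (rho1 y / rho0).
Proof.
  unfold chi. apply is_derive_ext with (f := fun y => scal (RInt rho1 0 y) (/rho0)).
  { intros; reflexivity. }
  replace (rho1 y / rho0) with (scal (rho1 y) (/rho0)) by reflexivity.
  apply (is_derive_scal_l (K:=R_AbsRing) (V:=R_NormedModule) (fun y => RInt rho1 0 y)). apply (is_derive_RInt rho1 (fun b => RInt rho1 0 b) 0).
  - apply filter_forall. intros b. apply (RInt_correct (V:=R_CompleteNormedModule)), ex_rho1.
  - apply rho1_c.
Qed.

Lemma chi_c y : continuous chi y.
Proof. apply (ex_derive_continuous (K:=R_AbsRing) (V:=R_NormedModule)). eexists; apply chi_deriv. Qed.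

Lemma chi_mono x y : x <= y -> chi x <= chi y.
Proof.
  intros H. unfold chi. assert (Hp := rho0_pos).
  rewrite <- (RInt_Chasles rho1 0 x y) by apply ex_rho1.
  assert (0 <= RInt rho1 x y) by (apply RInt_ge_0; auto using ex_rho1; intros; apply rho1_ge0).
  unfold plus; simpl. unfold Rdiv. apply Rmult_le_compat_r. apply Rlt_le, Rinv_0_lt_compat; auto. lra.
Qed.

Lemma chi_0 y : y <= 0 -> chi y = 0.
Proof.
  intros H. unfold chi. rewrite (RInt_ext rho1 (fun _ => 0)).
  - rewrite RInt_const. unfold scal; simpl; unfold mult; simpl. unfold Rdiv; ring.
  - intros x Hx. apply rho1_out. rewrite Rmin_right, Rmax_left in Hx; lra.
Qed.

Lemma chi_1 y : 1 <= y -> chi y = 1.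
Proof.
  intros H. unfold chi. assert (Hp := rho0_pos).
  rewrite <- (RInt_Chasles rho1 0 1 y) by apply ex_rho1.
  rewrite (RInt_ext rho1 (fun _ => 0) 1 y).
  - rewrite RInt_const. unfold scal, plus; simpl; unfold mult, plus; simpl. unfold rho0. field. unfold rho0 in Hp; lra.
  - intros x Hx. apply rho1_out. rewrite Rmin_left, Rmax_right in Hx; lra.
Qed.

Lemma chi_01 y : 0 <= chi y <= 1.
Proof.
  split.
  - rewrite <- (chi_0 (Rmin y 0)) by apply Rmin_r. apply chi_mono, Rmin_l.
  - rewrite <- (chi_1 (Rmax y 1)) by apply Rmax_r. apply chi_mono, Rmax_l.
Qed.

Definition F s t := xi s t * (t / sqrt (t^2 + s^2)).
Definition dF s t := s * (rho1 (t + 1 - s^2/2) / rho0) * (t / sqrt (t^2 + s^2))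
   - xi s t * (t * s / (sqrt (t^2+s^2))^3).

Lemma F_deriv s t : 0 < s -> is_derive (fun u => F u t) s (dF s t).
Proof.
  intros Hs. unfold F, dF, xi.
  assert (Hc := chi_deriv (t+1-s^2/2)).
  assert (Hq : 0 < sqrt (t^2 + s^2)) by (apply sqrt_lt_R0; nra).
  auto_derive.
  - replace (t + 1 + - (s * (s * 1) * / 2)) with (t+1-s^2/2) by field.
    replace (t * (t * 1) + s * (s * 1)) with (t^2+s^2) by ring.
    repeat split; try lra. eexists; eauto. nra.
  - replace (t + 1 + - (s * (s * 1) * / 2)) with (t+1-s^2/2) by field.
    replace (t * (t * 1) + s * (s * 1)) with (t^2+s^2) by ring.
    change (fun x : R => chi x) with chi. rewrite (is_derive_unique _ _ _ Hc). field. assert (H0 := rho0_pos). split; lra.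
Qed.

Lemma c2_div f g x y : continuity_2d_pt f x y -> continuity_2d_pt g x y -> g x y <> 0 ->
  continuity_2d_pt (fun u v => f u v / g u v) x y.
Proof. intros. apply continuity_2d_pt_mult; auto. apply continuity_2d_pt_inv; auto. Qed.

Lemma c2_pow f x y n : continuity_2d_pt f x y -> continuity_2d_pt (fun u v => f u v ^ n) x y.
Proof.
  intros H; induction n; simpl. apply continuity_2d_pt_const.
  apply continuity_2d_pt_mult; auto.
Qed.

Lemma c2_rho1 f x y : continuity_2d_pt f x y -> continuity_2d_pt (fun u v => rho1 (f u v)) x y.
Proof. intros; apply continuity_1d_2d_pt_comp; auto. apply rho1_cont. Qed.

Lemma c2_chi f x y : continuity_2d_pt f x y -> continuity_2d_pt (fun u v => chi (f u v)) x y.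
Proof. intros; apply continuity_1d_2d_pt_comp; auto. apply continuity_pt_filterlim, chi_c. Qed.

Lemma c2_sqrt f x y : continuity_2d_pt f x y -> 0 <= f x y -> continuity_2d_pt (fun u v => sqrt (f u v)) x y.
Proof. intros; apply continuity_1d_2d_pt_comp; auto. apply continuity_pt_sqrt; auto. Qed.

Ltac c2 := repeat first [ apply continuity_2d_pt_id1 | apply continuity_2d_pt_id2 | apply continuity_2d_pt_const
   | apply c2_rho1 | apply c2_chi | apply c2_sqrt | apply c2_pow | apply c2_div
   | apply continuity_2d_pt_plus | apply continuity_2d_pt_minus | apply continuity_2d_pt_mult
   | apply continuity_2d_pt_opp | apply continuity_2d_pt_inv ].

Lemma dF_cont s t : 0 < s -> continuity_2d_pt dF s t.
Proof.
  intros Hs. assert (Hq : 0 < sqrt (t^2 + s^2)) by (apply sqrt_lt_R0; nra).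
  assert (H0 := rho0_pos).
  unfold dF, xi. c2.
  all: try (apply pow_nonzero; lra). all: try (intro; lra). all: try (apply Rplus_le_le_0_compat; apply pow2_ge_0).
Qed.

Lemma F_cont s t : 0 < s -> continuity_2d_pt F s t.
Proof.
  intros Hs. assert (Hq : 0 < sqrt (t^2 + s^2)) by (apply sqrt_lt_R0; nra).
  unfold F, xi. c2.
  all: try lra. all: try nra. all: try (intro; lra). all: try (apply Rplus_le_le_0_compat; apply pow2_ge_0).
Qed.

Lemma c2_to_1 f x y : continuity_2d_pt f x y -> continuous (f x) y.
Proof.
  intros H. apply continuity_pt_filterlim. intros eps Heps.
  destruct (H (mkposreal eps Heps)) as [d Hd].
  exists d. split. apply cond_pos. intros z [_ Hz]. simpl in *. unfold R_dist in *.
  apply Hd. rewrite Rminus_eq_0, Rabs_R0. apply cond_pos. auto.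
Qed.

Lemma loc_pos s : 0 < s -> locally s (fun x => 0 < x).
Proof.
  intros Hs. exists (mkposreal s Hs). intros y Hy.
  unfold ball in Hy; simpl in Hy; unfold AbsRing_ball, abs, minus, plus, opp in Hy; simpl in Hy.
  apply Rabs_def2 in Hy. lra.
Qed.

Lemma T_deriv s r : 0 < s -> is_derive (fun s' => T s' r) s (1 + RInt (dF s) 0 r).
Proof.
  intros Hs. unfold T.
  apply (is_derive_plus (K:=R_AbsRing) (V:=R_NormedModule) (fun s' => s') (fun s' => RInt (fun t => F s' t) 0 r)).
  - apply (is_derive_id (K:=R_AbsRing)).
  - replace (RInt (dF s) 0 r) with (RInt (fun t => Derive (fun u => F u t) s) 0 r).
    + apply is_derive_RInt_param.
      * eapply filter_imp; [|apply loc_pos; exact Hs]. intros x Hx t _. eexists; apply F_deriv; auto.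
      * intros t _. apply continuity_2d_pt_ext_loc with (f := dF); [|apply dF_cont; auto].
        exists (mkposreal s Hs). intros u v Hu _. simpl in Hu. apply Rabs_def2 in Hu.
        symmetry; apply is_derive_unique, F_deriv; lra.
      * eapply filter_imp; [|apply loc_pos; exact Hs]. intros x Hx.
        apply (ex_RInt_continuous (V:=R_CompleteNormedModule)). intros z _. apply c2_to_1, F_cont; auto.
    + apply RInt_ext. intros; apply is_derive_unique, F_deriv; auto.
Qed.

Definition P s t := s * (rho1 (t + 1 - s^2/2) / rho0) * (t / sqrt (t^2 + s^2)).
Definition K s t := t * s / (sqrt (t^2+s^2))^3.
Definition G s t := s * (rho1 (t + 1 - s^2/2) / rho0).

Ltac side := try lra; try nra; try (apply pow_nonzero; lra); try (intro; lra);
   try (apply Rplus_le_le_0_compat; apply pow2_ge_0).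

Lemma sq_pos s t : 0 < s -> 0 < sqrt (t^2 + s^2).
Proof. intros; apply sqrt_lt_R0; nra. Qed.

Lemma P_c s t : 0 < s -> continuous (P s) t.
Proof. intros Hs. assert (Hq := sq_pos s t Hs). assert (H0 := rho0_pos).
  apply (c2_to_1 P). unfold P. c2; side. Qed.
Lemma G_c s t : 0 < s -> continuous (G s) t.
Proof. intros Hs. assert (H0 := rho0_pos).
  apply (c2_to_1 G). unfold G. c2; side. Qed.
Lemma K_c s t : 0 < s -> continuous (K s) t.
Proof. intros Hs. assert (Hq := sq_pos s t Hs).
  apply (c2_to_1 K). unfold K. c2; side. Qed.
Lemma xK_c s t : 0 < s -> continuous (fun t => xi s t * K s t) t.
Proof. intros Hs. assert (Hq := sq_pos s t Hs).
  apply (c2_to_1 (fun u v => xi u v * K u v)). unfold K, xi. c2; side. Qed.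

Lemma exR (f : R -> R) a b : (forall z, continuous f z) -> ex_RInt f a b.
Proof. intros H. apply (ex_RInt_continuous (V:=R_CompleteNormedModule)). intros; apply H. Qed.

Lemma K_int s r : 0 < s -> RInt (K s) 0 r = 1 - s / sqrt (r^2 + s^2).
Proof.
  intros Hs.
  assert (H1 : forall x, Rmin 0 r <= x <= Rmax 0 r -> is_derive (fun t => - s / sqrt (t^2 + s^2)) x (K s x)).
  { intros x _. assert (Hq := sq_pos s x Hs). unfold K. auto_derive.
    + replace (x * (x * 1) + s * (s * 1)) with (x^2+s^2) by ring. repeat split; try nra; lra.
    + replace (x * (x * 1) + s * (s * 1)) with (x^2+s^2) by ring. field. apply Rgt_not_eq; lra. }
  assert (H2 : forall x, Rmin 0 r <= x <= Rmax 0 r -> continuous (K s) x).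
  { intros; apply K_c; auto. }
  rewrite (is_RInt_unique _ _ _ _ (is_RInt_derive _ _ _ _ H1 H2)).
  unfold minus, plus, opp; simpl. replace (0*(0*1)+s*(s*1)) with (s*s) by ring. rewrite sqrt_square by lra. replace (r*(r*1)+s*(s*1)) with (r^2+s^2) by ring.
  field. split. apply Rgt_not_eq, sq_pos; lra. lra.
Qed.

Lemma G_int s r : 0 < s -> RInt (G s) 0 r = s * (chi (r + 1 - s^2/2) - chi (1 - s^2/2)).
Proof.
  intros Hs.
  assert (H1 : forall x, Rmin 0 r <= x <= Rmax 0 r -> is_derive (fun t => s * chi (t + 1 - s^2/2)) x (G s x)).
  { intros x _. unfold G. assert (Hc := chi_deriv (x+1-s^2/2)).
    auto_derive.
    + replace (x + 1 + - (s * (s * 1) * / 2)) with (x+1-s^2/2) by field. eexists; eauto.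
    + replace (x + 1 + - (s * (s * 1) * / 2)) with (x+1-s^2/2) by field.
      change (fun x : R => chi x) with chi. replace (x + 1 + - (s * (s * 1) / 2)) with (x+1-s^2/2) by field. rewrite (is_derive_unique _ _ _ Hc). ring. }
  assert (H2 : forall x, Rmin 0 r <= x <= Rmax 0 r -> continuous (G s) x).
  { intros; apply G_c; auto. }
  rewrite (is_RInt_unique _ _ _ _ (is_RInt_derive _ _ _ _ H1 H2)).
  unfold minus, plus, opp; simpl. rewrite Rplus_0_l. ring.
Qed.

Lemma K_ge0 s t : 0 < s -> 0 <= t -> 0 <= K s t.
Proof. intros Hs Ht. assert (Hq := sq_pos s t Hs). unfold K.
  apply Rdiv_le_0_compat. nra. apply pow_lt; lra. Qed.

Lemma G_ge0 s t : 0 < s -> 0 <= G s t.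
Proof. intros Hs. assert (H0 := rho0_pos). assert (H1 := rho1_ge0 (t + 1 - s^2/2)). unfold G.
  apply Rmult_le_pos. lra. apply Rdiv_le_0_compat; lra. Qed.

Lemma tq s t : 0 < s -> 0 <= t -> 0 <= t / sqrt (t^2+s^2) <= 1.
Proof. intros Hs Ht. assert (Hq := sq_pos s t Hs). split.
  apply Rdiv_le_0_compat; lra.
  apply Rmult_le_reg_r with (sqrt (t^2+s^2)); auto. unfold Rdiv. rewrite Rmult_assoc, Rinv_l by lra.
  rewrite Rmult_1_r, Rmult_1_l. rewrite <- (sqrt_pow2 t) at 1 by lra. apply sqrt_le_1_alt. nra.
Qed.

Lemma Dv_bounds s r : 2 <= s -> 0 <= r ->
  s / sqrt (r^2+s^2) <= 1 + RInt (dF s) 0 r /\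
  1 + RInt (dF s) 0 r <= xi s r * (s / sqrt (r^2+s^2)) + (1 - xi s r) * (1 + s).
Proof.
  intros Hs Hr. assert (Hs0 : 0 < s) by lra.
  assert (E : RInt (dF s) 0 r = RInt (P s) 0 r - RInt (fun t => xi s t * K s t) 0 r).
  { rewrite <- (RInt_minus (V:=R_CompleteNormedModule)).
    - apply RInt_ext. intros; unfold dF, P, K, minus, plus, opp; simpl. ring.
    - apply exR; intros; apply P_c; auto.
    - apply exR; intros; apply xK_c; auto. }
  assert (EK := K_int s r Hs0). assert (EG := G_int s r Hs0).
  rewrite (chi_0 (1 - s^2/2)) in EG by nra.
  assert (I1a : 0 <= RInt (P s) 0 r).
  { apply RInt_ge_0; auto. apply exR; intros; apply P_c; auto.
    intros t Ht. unfold P. assert (H := tq s t Hs0 ltac:(lra)). assert (H2 := G_ge0 s t Hs0). unfold G in H2.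
    apply Rmult_le_pos; lra. }
  assert (I1b : RInt (P s) 0 r <= RInt (G s) 0 r).
  { apply RInt_le; auto. apply exR; intros; apply P_c; auto. apply exR; intros; apply G_c; auto.
    intros t Ht. unfold P. assert (H := tq s t Hs0 ltac:(lra)). assert (H2 := G_ge0 s t Hs0). unfold G in *.
    nra. }
  assert (I2b : RInt (fun t => xi s t * K s t) 0 r <= RInt (K s) 0 r).
  { apply RInt_le; auto. apply exR; intros; apply xK_c; auto. apply exR; intros; apply K_c; auto.
    intros t Ht. assert (H := K_ge0 s t Hs0 ltac:(lra)). assert (H2 := chi_01 (t + 1 - s^2/2)).
    unfold xi. nra. }
  assert (I2a : (1 - chi (r + 1 - s^2/2)) * RInt (K s) 0 r <= RInt (fun t => xi s t * K s t) 0 r).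
  { assert (Es : RInt (fun t => (1 - chi (r + 1 - s^2/2)) * (K s t)) 0 r = (1 - chi (r + 1 - s^2/2)) * (RInt (K s) 0 r)).
    { apply (RInt_scal (V:=R_CompleteNormedModule)). apply exR; intros; apply K_c; auto. }
    rewrite <- Es.
    apply RInt_le; auto. apply exR; intros. apply (c2_to_1 (fun u v => (1 - chi (r + 1 - u^2/2)) * K u v)). unfold K. c2; side.
    all: try (apply Rgt_not_eq, pow_lt, sq_pos; lra).
    apply exR; intros; apply xK_c; auto.
    intros t Ht. assert (H := K_ge0 s t Hs0 ltac:(lra)). assert (H2 := chi_mono (t + 1 - s^2/2) (r + 1 - s^2/2) ltac:(lra)).
    unfold xi. nra. }
  unfold xi in *. rewrite E. rewrite EK in *. rewrite EG in *. 
  assert (Hq := sq_pos s r Hs0). assert (Hsq : 0 <= s / sqrt (r^2+s^2)) by (apply Rdiv_le_0_compat; lra).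
  split; nra.
Qed.

Theorem lemma6p1 :
  exists C : R, 0 < C /\
  forall s r : R, 2 <= s -> 0 <= r ->
    ex_derive (fun s' => T s' r) s /\
    (r <= -1 + s^2/2 ->
       Rabs (Derive (fun s' => T s' r) s) <= C * (s / sqrt (s^2 + r^2))) /\
    (-1 + s^2/2 <= r -> r <= s^2/2 ->
       Rabs (Derive (fun s' => T s' r) s)
         <= C * (xi s r * s / sqrt (s^2 + r^2) + 2 * (1 - xi s r) * s)) /\
    (s^2/2 <= r ->
       Rabs (Derive (fun s' => T s' r) s) <= 2 * C * s).
Proof.
  exists 2. split. lra. intros s r Hs Hr.
  assert (Hd := T_deriv s r ltac:(lra)).
  replace (Derive (fun s' => T s' r) s) with (1 + RInt (dF s) 0 r) by (symmetry; apply is_derive_unique; exact Hd).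
  destruct (Dv_bounds s r Hs Hr) as [L U].
  rewrite (Rplus_comm (s^2) (r^2)).
  assert (Hq := sq_pos s r ltac:(lra)). assert (Hsq : 0 <= s / sqrt (r^2+s^2)) by (apply Rdiv_le_0_compat; lra).
  assert (Hsq1 : s / sqrt (r^2+s^2) <= 1).
  { assert (Hle : s <= sqrt (r^2+s^2)) by (rewrite <- (sqrt_pow2 s) at 1 by lra; apply sqrt_le_1_alt; nra).
    assert (Hi : 0 < / sqrt (r^2+s^2)) by (apply Rinv_0_lt_compat; lra).
    unfold Rdiv. replace 1 with (sqrt (r^2+s^2) * / sqrt (r^2+s^2)) by (apply Rinv_r; lra).
    apply Rmult_le_compat_r; lra. }
  rewrite Rabs_right by lra.
  assert (Hx := chi_01 (r + 1 - s^2/2)).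
  split; [eexists; eauto|]. split; [|split].
  - intros H. unfold xi in U. rewrite (chi_0 (r + 1 - s^2/2)) in U by lra. lra.
  - intros H1 H2. unfold xi in *. unfold Rdiv in *. nra.
  - intros H. unfold xi in U. rewrite (chi_1 (r + 1 - s^2/2)) in U by lra. lra.
Qed.
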